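(* Let $\ell\geq 1$, let $G\subseteq\mathcal{G}_\Sigma^\ell$ be a non-empty finite set of generalized strings of length $\ell$, and let $(Q,\Sigma,\Delta,Q_\alpha,F)=\mathrm{NFA}(G)$. Then for every $s\in\Sigma^*$: there exists $q\in Q_\alpha$ with $\hat\Delta(q,s)\cap F\neq\emptyset$ if and only if there exists $g\in G$ such that $s\vartriangleleft g$.
   Context: For a finite alphabet $\Sigma$, $\mathcal{G}_\Sigma=\mathcal{P}(\Sigma)\setminus\{\emptyset\}$ and a generalized string is a finite string $g=g[1]\cdots g[|g|]$ over $\mathcal{G}_\Sigma$; $\mathcal{G}_\Sigma^\ell$ is the set of generalized strings of length $\ell$. A string $s\in\Sigma^*$ matches $g$, written $s\vartriangleleft g$, if $|s|=|g|$ and $s[i]\in g[i]$ for all $1\le i\le|g|$. Construction of $\mathrm{NFA}(G)$: let $\bar Q=\mathcal{P}(G)\times\{0,\dots,\ell\}$ and define $\mathrm{Parent}:\bar Q\times\Sigma\to\bar Q\cup\{\bot\}$ by $\mathrm{Parent}((H,k),\sigma)=(\{h\in H:\sigma\in h[k]\},k-1)$ if $k>0$ and $\bot$ if $k=0$. Set $Q_\ell=\{(G,\ell)\}$ and, for $i=\ell-1,\dots,0$, $Q_i=\{(H,i): H\subseteq G,\ H\neq\emptyset,\ \exists q\in Q_{i+1},\sigma\in\Sigma \text{ with } \mathrm{Parent}(q,\sigma)=(H,i)\}$. Let $Q=Q_0\cup\dots\cup Q_\ell$, $\Delta((H,k),\sigma)=\{q\in Q_{k+1}:\mathrm{Parent}(q,\sigma)=(H,k)\}$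 if $k<\ell$ and $\emptyset$ if $k=\ell$, $Q_\alpha=Q_0$, $F=Q_\ell$. Then $\mathrm{NFA}(G)=(Q,\Sigma,\Delta,Q_\alpha,F)$. $\hat\Delta$ denotes the extension of $\Delta$ to strings: $\hat\Delta(q,\varepsilon)=\{q\}$, $\hat\Delta(q,\sigma s)=\bigcup_{p\in\Delta(q,\sigma)}\hat\Delta(p,s)$. *)

(* Defs.v *)
From mathcomp Require Import all_boot.
Set Implicit Arguments. Unset Strict Implicit. Unset Printing Implicit Defensive.

Section NFA.
Variables (Sigma : finType) (l : nat).

(* A generalized string of length l: an l-tuple of subsets of Sigma
   (non-emptiness of the entries is imposed as a hypothesis, see gstring_ok). *)
Definition gstring := (l.-tuple {set Sigma}).

Definition gstring_ok (g : gstring) : bool :=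
  [forall i : 'I_l, tnth g i != set0].

(* g[k] with 1-based index k (1 <= k <= l) *)
Definition gat (g : gstring) (k : nat) : {set Sigma} := nth set0 g k.-1.

Definition matches (s : seq Sigma) (g : gstring) : bool :=
  (size s == l) && all2 (fun (x : Sigma) (A : {set Sigma}) => x \in A) s (tval g).

Definition state := ({set gstring} * nat)%type.

Definition Parent (q : state) (sigma : Sigma) : option state :=
  if q.2 is k.+1 then Some ([set h in q.1 | sigma \in gat h q.2], k) else None.

(* Qset G j = the set of H such that (H, l - j) \in Q_{l-j} *)
Fixpoint Qset (G : {set gstring}) (j : nat) : {set {set gstring}} :=
  if j is j'.+1 then
    [set H : {set gstring} | (H \subset G) && (H != set0) &&
       [exists H' in Qset G j', exists sigma : Sigma,
          Parent (H', l - j') sigma == Some (H, l - j'.+1)]]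
  else [set G].

(* Q_i, as a set of first components *)
Definition Qlev (G : {set gstring}) (i : nat) : {set {set gstring}} := Qset G (l - i).

Definition inQ (G : {set gstring}) (q : state) : bool :=
  (q.2 <= l) && (q.1 \in Qlev G q.2).

Definition Delta (G : {set gstring}) (q : state) (sigma : Sigma) : seq state :=
  if q.2 < l then
    [seq (H', q.2.+1) | H' <- enum (Qlev G q.2.+1) & Parent (H', q.2.+1) sigma == Some q]
  else [::].

Fixpoint hatDelta (G : {set gstring}) (q : state) (s : seq Sigma) : seq state :=
  if s is sigma :: s' then flatten [seq hatDelta G p s' | p <- Delta G q sigma]
  else [:: q].

Definition initial (G : {set gstring}) (q : state) : bool := (q.2 == 0) && inQ G q.
Definition final (G : {set gstring}) (q : state) : bool := q == (G, l).

End NFA.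

(* Main.v *)
Require Import Defs.
From mathcomp Require Import all_boot.
Set Implicit Arguments. Unset Strict Implicit. Unset Printing Implicit Defensive.

Section Aux.
Variables (Sigma : finType) (l : nat).
Notation gs := (gstring Sigma l).
Definition P := (fun (x : Sigma) (A : {set Sigma}) => x \in A).

Lemma all2_dropP (s : seq Sigma) (t : seq {set Sigma}) k :
  all2 P s t -> all2 P (drop k s) (drop k t).
Proof.
elim: s t k => [|x s IH] [|y t] [|k] //= /andP [_ H]; exact: IH.
Qed.

Lemma step (x0 : Sigma) (s : seq Sigma) (h : gs) k : size s = l -> k < l ->
  all2 P (drop k s) (drop k h) =
  (nth x0 s k \in nth set0 h k) && all2 P (drop k.+1 s) (drop k.+1 h).
Proof.
move=> Hs Hk.
by rewrite (drop_nth x0) ?Hs // (drop_nth set0) ?size_tuple.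
Qed.

Lemma dirA (G : {set gs}) (s : seq Sigma) (q : state Sigma l) :
  (G, l) \in hatDelta G q s ->
  q.2 + size s = l /\ q.1 = [set h in G | all2 P s (drop q.2 h)].
Proof.
elim: s q => [|x s IH] [H k] /=.
  rewrite inE => /eqP [<- <-]; split; first by rewrite addn0.
  apply/setP=> h; rewrite inE drop_oversize ?size_tuple //.
  by case: (h \in G).
move=> /flattenP [ps /mapP [p Hp ->] Hin].
move: Hp; rewrite /Delta /=; case: ifP => Hkl //.
case/mapP=> H'; rewrite mem_filter => /andP [/eqP Hpar _] Ep; subst p.
have [E1 E2] := IH _ Hin; move: E1 E2 => /= E1 E2.
move: Hpar; rewrite /Parent /= => -[<-].
split; first by rewrite addnS.
apply/setP=> h; rewrite !inE E2 inE -andbA; congr (_ && _).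
by rewrite [drop k h](drop_nth set0) ?size_tuple //= /gat /= andbC.
Qed.

Definition Hk (G : {set gs}) (s : seq Sigma) k := [set h in G | all2 P (drop k s) (drop k h)].

Lemma Hk_l (G : {set gs}) (s : seq Sigma) : size s = l -> Hk G s l = G.
Proof.
move=> Hs; apply/setP=> h; rewrite inE !drop_oversize ?size_tuple ?Hs //.
by case: (h \in G).
Qed.

Lemma dirB (G : {set gs}) (s : seq Sigma) (g : gs) : g \in G -> size s = l ->
  all2 P s g -> forall j, j <= l -> Hk G s (l - j) \in Qset G j.
Proof.
move=> Hg Hs Hm; elim=> [|j IH] Hj /=.
  by rewrite subn0 inE Hk_l.
have Hj' : j <= l by apply: ltnW.
have E : l - j = (l - j.+1).+1 by rewrite subnSK.
have x0 : Sigma.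
  have : 0 < size s by rewrite Hs (leq_trans _ Hj).
  move: (s) => t; case: t => [//|x _ _]; exact: x.
rewrite inE; apply/andP; split; first (apply/andP; split).
- by apply/subsetP=> h; rewrite inE => /andP [].
- apply/set0Pn; exists g; rewrite inE Hg /=.
  exact: all2_dropP.
apply/existsP; exists (Hk G s (l - j)); rewrite IH //=.
apply/existsP; exists (nth x0 s (l - j.+1)).
rewrite E /Parent /=; apply/eqP; congr (Some (_, _)).
apply/setP=> h; rewrite !inE /gat /=.
rewrite [in RHS](step x0 h) //.
  by rewrite -andbA [_ && (nth _ _ _ \in _)]andbC andbA.
by rewrite -E leq_subr.
Qed.

Lemma dirC (G : {set gs}) (s : seq Sigma) (g : gs) : g \in G -> size s = l ->
  all2 P s g -> forall j, j <= l ->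
  (G, l) \in hatDelta G (Hk G s (l - j), l - j) (drop (l - j) s).
Proof.
move=> Hg Hs Hm; elim=> [|j IH] Hj.
  by rewrite subn0 Hk_l // drop_oversize ?Hs //= inE.
have Hj' : j <= l by apply: ltnW.
have E : l - j = (l - j.+1).+1 by rewrite subnSK.
have x0 : Sigma.
  have : 0 < size s by rewrite Hs (leq_trans _ Hj).
  move: (s) => t; case: t => [//|x _ _]; exact: x.
have Hlt : l - j.+1 < l by rewrite -E leq_subr.
rewrite (drop_nth x0) ?Hs //=.
apply/flattenP; exists (hatDelta G (Hk G s (l - j), l - j) (drop (l - j) s)); last exact: IH.
rewrite -E; apply: map_f; rewrite /Delta /= Hlt -E.
apply: map_f; rewrite mem_filter mem_enum /Qlev.
have -> : l - (l - j) = j by rewrite subKn.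
rewrite (dirB Hg Hs Hm Hj') andbT.
rewrite E /Parent /=; apply/eqP; congr (Some (_, _)).
apply/setP=> h; rewrite !inE /gat /=.
rewrite [in RHS](step x0 h) //.
by rewrite -andbA [_ && (nth _ _ _ \in _)]andbC andbA.
Qed.
End Aux.

Theorem mainTheorem5 (Sigma : finType) (l : nat) (G : {set gstring Sigma l}) :
  1 <= l ->
  G != set0 ->
  (forall g, g \in G -> gstring_ok g) ->
  forall s : seq Sigma,
    (exists q : state Sigma l, initial G q /\ has (final G) (hatDelta G q s)) <->
    (exists g, g \in G /\ matches s g).
Proof.
move=> Hl _ _ s; split.
- move=> [[H k] [/andP [/eqP /= Hk0 /andP [_ HQ]] /hasP [q Hq /eqP Eq]]].
  subst k q; have [/= Hsz EH] := dirA Hq.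
  move: HQ; rewrite /Qlev subn0; case: l Hl G H s Hq Hsz EH => // l' _ G H s Hq Hsz EH.
  rewrite /= inE => /andP [/andP [_ /set0Pn [h Hh]] _].
  move: Hh; rewrite EH inE drop0 => /andP [HhG Hm].
  by exists h; split => //; rewrite /matches Hm -Hsz eqxx.
- move=> [g [Hg /andP [/eqP Hs Hm]]].
  exists (Hk G s 0, 0); split.
    rewrite /initial /inQ /= /Qlev subn0.
    by rewrite -{1}(subnn l) (dirB Hg Hs Hm (leqnn l)).
  apply/hasP; exists (G, l); last by rewrite /final.
  have := dirC Hg Hs Hm (leqnn l); by rewrite subnn drop0.
Qed.
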